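(* Let $\psi_j$ be a decomposable factorization curve of a (real or complex) factorization structure $\varphi:\mathfrak{h}\to V^*$, and let $1\le r\le\deg\psi_j+1$. Then for any $r$ pairwise distinct points $\ell_1,\ldots,\ell_r\in\mathbb{P}(V_j)$, the lines $\psi_j(\ell_1),\ldots,\psi_j(\ell_r)\subset\mathfrak{h}$ are linearly independent.
   Context: $V_1,\ldots,V_m$ are 2-dimensional vector spaces over $\mathbb{F}=\mathbb{R}$ or $\mathbb{C}$, $V^*=V_1^*\otimes\cdots\otimes V_m^*$, $\Sigma^0_{j,\ell}=V_1^*\otimes\cdots\otimes\ell^0\otimes\cdots\otimes V_m^*$ ($\ell^0$ the annihilator of $\ell$, in slot $j$). A factorization structure of dimension $m$ is an injective linear map $\varphi:\mathfrak{h}\to V^*$, $\dim\mathfrak{h}=m+1$, with $\dim(\varphi(\mathfrak{h})\cap\Sigma^0_{j,\ell})=1$ for all $j$ and all $\ell$ in a nonempty Zariski-open subset of $\mathbb{P}(V_j)$. The $j$-th factorization curve $\psi_j:\mathbb{P}(V_j)\to\mathbb{P}(\mathfrak{h})$ is the unique regular extension of the generically defined regular map $\ell\mapsto\varphi^{-1}(\varphi(\mathfrak{h})\cap\Sigma^0_{j,\ell})$; $\deg\psi_j$ is the integer $e$ with $\psi_j^*\mathcal{O}_{\mathfrak{h}}(1)\cong\mathcal{O}_{V_j}(e)$. Curves with the same image are equivalent; $\psi_j$ is decomposable if its equivalence class in $\{\psi_1,\ldots,\psi_m\}$ has exactly $\deg\psi_j$ elements. *)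

(* Defs.v *)
From mathcomp Require Import all_boot all_algebra.
From mathcomp Require Export reals.
From mathcomp.real_closed Require Export complex.
Set Implicit Arguments. Unset Strict Implicit. Unset Printing Implicit Defensive.
Import GRing.Theory.
Local Open Scope ring_scope.

(* V_j = F^2 with standard basis e_0,e_1 ; V_j^* = F^2 with the dual basis.
   A point l of P(V_j) is represented by a nonzero row vector v : 'rV_2
   (l = span v); two representatives give the same point iff (v == v')%MS.
   V^* = V_1^* (x) ... (x) V_m^* = F^(2^m); the basis tensor
   e^*_{x_1} (x) ... (x) e^*_{x_m} (x_k in {0,1}) has index
   i = \sum_k x_k 2^k, i.e. x_k = tbit k i.
   h = F^(m+1) (row vectors), phi : h -> V^* is x |-> x *m Phi. *)

Definition tbit (k : nat) (i : nat) : bool := odd (i %/ 2 ^ k).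

Section Defs.
Variable F : fieldType.

(* The generator of the annihilator l^0 of l = span v inside V_j^* *)
Definition annih (v : 'rV[F]_2) (b : bool) : F :=
  if b then v 0 0 else - v 0 1.

(* Sigma^0_{j,l} = V_1^* (x) ... (x) l^0 (x) ... (x) V_m^*, given as the row
   space spanned by the pure tensors
   e^*_{x_1} (x) ... (x) annih v (slot j) (x) ... (x) e^*_{x_m}. *)
Definition Sigma0 (m : nat) (j : 'I_m) (v : 'rV[F]_2) : 'M[F]_(2 ^ m) :=
  \matrix_(i < 2 ^ m, i' < 2 ^ m)
    ((\prod_(k < m | k != j) (tbit k i' == tbit k i)%:R) * annih v (tbit j i')).

(* phi^{-1}(phi(h) cap Sigma^0_{j,l}) as a subspace of h *)
Definition preimSigma (m : nat) (Phi : 'M[F]_(m.+1, 2 ^ m)) (j : 'I_m)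
    (v : 'rV[F]_2) : 'M[F]_(m.+1) :=
  kermx (Phi *m cokermx (Sigma0 j v)).

(* value at v = (v0, v1) of the binary form of degree e
   \sum_{k<=e} p_k v0^k v1^(e-k)  (p : {poly F} holds the coefficients p_k) *)
Definition bform (e : nat) (p : {poly F}) (v : 'rV[F]_2) : F :=
  \sum_(k < e.+1) p`_k * v 0 0 ^+ k * v 0 1 ^+ (e - k).

Definition is_bform (e : nat) (p : {poly F}) : bool := (size p <= e.+1)%N.

(* A nonempty Zariski-open subset of P^1 contains a nonempty basic open set
   D(f) = {l | f(l) <> 0} for a nonzero binary form f; conversely D(f) is a
   nonempty (F infinite) Zariski open. *)
Definition generically (P : 'rV[F]_2 -> Prop) : Prop :=
  exists (d : nat) (f : {poly F}), [/\ is_bform d f, f != 0 &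
    forall v : 'rV[F]_2, v != 0 -> bform d f v != 0 -> P v].

Definition factorization_structure (m : nat) (Phi : 'M[F]_(m.+1, 2 ^ m)) : Prop :=
  row_free Phi /\
  forall j : 'I_m, generically (fun v => \rank (Phi :&: Sigma0 j v)%MS = 1%N).

(* A regular map P^1 -> P(h) = P^m given in homogeneous coordinates by
   binary forms P_0..P_m of common degree e without common zero on
   P^1(algebraic closure): the dehomogenised polynomials have no common
   nonconstant factor and not all of them vanish at [1:0]. For such a map,
   psi^* O(1) = O(e). *)
Definition regular_P1_map (m e : nat) (P : 'I_m.+1 -> {poly F}) : Prop :=
  [/\ forall i, is_bform e (P i),
      forall d : {poly F}, (forall i, d %| P i) -> (size d <= 1)%N &
      exists i, (P i)`_e != 0].

Definition rmap_pt (m e : nat) (P : 'I_m.+1 -> {poly F}) (v : 'rV[F]_2)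
  : 'rV[F]_(m.+1) := \row_i bform e (P i) v.

(* (e, P) is a representation of the j-th factorization curve psi_j of Phi,
   of degree e: it is a regular map which agrees on a nonempty Zariski open
   subset with l |-> phi^{-1}(phi(h) cap Sigma^0_{j,l}). *)
Definition factorization_curve (m : nat) (Phi : 'M[F]_(m.+1, 2 ^ m)) (j : 'I_m)
    (e : nat) (P : 'I_m.+1 -> {poly F}) : Prop :=
  regular_P1_map e P /\
  generically (fun v => \rank (Phi :&: Sigma0 j v)%MS = 1%N /\
                        (rmap_pt e P v == preimSigma Phi j v)%MS).

Definition in_image (m e : nat) (P : 'I_m.+1 -> {poly F}) (w : 'rV[F]_(m.+1)) : Prop :=
  exists v : 'rV[F]_2, v != 0 /\ (rmap_pt e P v == w)%MS.

Definition same_image (m e1 e2 : nat) (P1 P2 : 'I_m.+1 -> {poly F}) : Prop :=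
  forall w : 'rV[F]_(m.+1), w != 0 -> (in_image e1 P1 w <-> in_image e2 P2 w).

End Defs.

(* Main.v *)
Require Import Defs.
From mathcomp Require Import all_boot all_algebra.
From mathcomp Require Import reals.
From mathcomp.real_closed Require Import complex.
From mathcomp Require Import zify ring.
Import GRing.Theory.
Local Open Scope ring_scope.
Set Implicit Arguments. Unset Strict Implicit. Unset Printing Implicit Defensive.


Lemma tbit0 i : tbit 0 i = odd i.
Proof. by rewrite /tbit expn0 divn1. Qed.

Lemma tbitS k i : tbit k.+1 i = tbit k (i %/ 2).
Proof. by rewrite /tbit expnS divnMA. Qed.

Lemma tbit_inj n : forall i i' : nat, (i < 2 ^ n)%N -> (i' < 2 ^ n)%N ->
  (forall k, (k < n)%N -> tbit k i = tbit k i') -> i = i'.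
Proof.
elim: n => [|n IH] i i' Hi Hi' H.
  by rewrite expn0 in Hi Hi'; lia.
have h0 := H 0%N isT; rewrite !tbit0 in h0.
have h2 : (i %/ 2 = i' %/ 2)%N.
  apply: IH.
  - by rewrite ltn_divLR // -expnSr.
  - by rewrite ltn_divLR // -expnSr.
  by move=> k Hk; rewrite -!tbitS; apply: H.
by rewrite (divn_eq i 2) (divn_eq i' 2) h2 !modn2 h0.
Qed.

Section Bits.
Variable m : nat.

Definition bits (i : 'I_(2 ^ m)) : {ffun 'I_m -> bool} := [ffun k : 'I_m => tbit k i].

Lemma bits_inj : injective bits.
Proof.
move=> i i' H; apply: val_inj; apply: (@tbit_inj m); [exact: ltn_ord|exact: ltn_ord|] => k Hk.
by have := congr1 (fun f : {ffun 'I_m -> bool} => f (Ordinal Hk)) H; rewrite !ffunE.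
Qed.

Lemma exp2_gt0 : (0 < 2 ^ m)%N. Proof. by rewrite expn_gt0. Qed.

Definition binv (x : {ffun 'I_m -> bool}) : 'I_(2 ^ m) :=
  odflt (Ordinal exp2_gt0) [pick i | bits i == x].

Lemma binvK x : bits (binv x) = x.
Proof.
have : x \in codom bits.
  apply: inj_card_onto; first exact: bits_inj.
  by rewrite card_ffun card_bool !card_ord.
case/codomP => i ->; rewrite /binv; case: pickP => [i' /eqP //|/(_ i)].
by rewrite eqxx.
Qed.

Lemma bitsK i : binv (bits i) = i.
Proof. by apply: bits_inj; rewrite binvK. Qed.

Lemma tbit_binv x (k : 'I_m) : tbit k (binv x) = x k.
Proof. by rewrite -[in RHS](binvK x) ffunE. Qed.

Definition setb (x : {ffun 'I_m -> bool}) (k : 'I_m) (b : bool) : {ffun 'I_m -> bool} :=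
  [ffun k' => if k' == k then b else x k'].

Lemma setb_comm x k k' b b' : k != k' ->
  setb (setb x k b) k' b' = setb (setb x k' b') k b.
Proof.
move=> nk; apply/ffunP => t; rewrite !ffunE.
case: (eqVneq t k') => [Ht|Ht]; case: (eqVneq t k) => [Ht2|Ht2] //.
by move: nk; rewrite -Ht -Ht2 eqxx.
Qed.

Lemma setb_id x k : setb x k (x k) = x.
Proof. by apply/ffunP => t; rewrite !ffunE; case: eqP => // ->. Qed.

End Bits.


Section Contr.
Variable F : fieldType.
Variable m : nat.

Definition Cx (k : 'I_m) (u : 'rV[F]_2) (y : 'rV[F]_(2 ^ m)) : 'rV[F]_(2 ^ m) :=
  \row_i (y 0 (binv (setb (bits i) k false)) * u 0 0 +
          y 0 (binv (setb (bits i) k true)) * u 0 1).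

Definition det2 (u u' : 'rV[F]_2) := u 0 0 * u' 0 1 - u 0 1 * u' 0 0.

Lemma Cx_sum (I : finType) k u (c : I -> F) (y : I -> 'rV[F]_(2 ^ m)) :
  Cx k u (\sum_a c a *: y a) = \sum_a c a *: Cx k u (y a).
Proof.
apply/rowP => i; rewrite !mxE !summxE !big_distrl -big_split /=.
by apply: eq_bigr => a _; rewrite !mxE; ring.
Qed.

Lemma Cx_scale k u s y : Cx k u (s *: y) = s *: Cx k u y.
Proof. by apply/rowP => i; rewrite !mxE; ring. Qed.

Lemma Cx0 k u : Cx k u 0 = 0.
Proof. by apply/rowP => i; rewrite !mxE; ring. Qed.

Lemma Cx_comm k k' u u' y : k != k' -> Cx k' u' (Cx k u y) = Cx k u (Cx k' u' y).
Proof.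
move=> nk; apply/rowP => i; rewrite !mxE !binvK.
rewrite !(setb_comm _ _ _ nk).
ring.
Qed.

Lemma Cx_det k u u' y : Cx k u y = 0 -> Cx k u' y = 0 -> y != 0 -> det2 u u' = 0.
Proof.
move=> H1 H2 /eqP Hy.
have [i Hi] : exists i, y 0 i != 0.
  apply/existsP; apply: contraT; rewrite negb_exists => /forallP H.
  by exfalso; apply: Hy; apply/rowP => i; rewrite mxE; move: (H i); rewrite negbK => /eqP.
have := congr1 (fun z : 'rV[F]_(2 ^ m) => z 0 i) H1; have := congr1 (fun z : 'rV[F]_(2 ^ m) => z 0 i) H2.
rewrite !mxE => E2 E1.
set y0 := y 0 _ in E1 E2; set y1 := y 0 _ in E1 E2.
have : (det2 u u' * y0 = 0) /\ (det2 u u' * y1 = 0).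
  rewrite /det2; split.
    have -> : (u 0 0 * u' 0 1 - u 0 1 * u' 0 0) * y0 =
      (y0 * u 0 0 + y1 * u 0 1) * u' 0 1 - (y0 * u' 0 0 + y1 * u' 0 1) * u 0 1 by ring.
    by rewrite E1 E2; ring.
  have -> : (u 0 0 * u' 0 1 - u 0 1 * u' 0 0) * y1 =
    (y0 * u' 0 0 + y1 * u' 0 1) * u 0 0 - (y0 * u 0 0 + y1 * u 0 1) * u' 0 0 by ring.
  by rewrite E1 E2; ring.
case=> /eqP; rewrite mulf_eq0 => /orP [/eqP //|Hy0] /eqP; rewrite mulf_eq0 => /orP [/eqP //|Hy1].
have Hx : i = binv (setb (bits i) k (bits i k)) by rewrite setb_id bitsK.
move: Hy0 Hy1; rewrite /y0 /y1; case: (bits i k) Hx => Hx; rewrite -Hx.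
  by move=> _ /eqP; move: Hi => /eqP.
by move=> /eqP; move: Hi => /eqP.
Qed.

Lemma Sigma0_Cx k v y : (y <= Sigma0 k v)%MS -> Cx k v y = 0.
Proof.
case/submxP => D ->; apply/rowP => i; rewrite !mxE !big_distrl -big_split /=.
apply: big1 => i' _; rewrite !mxE !tbit_binv !ffunE !eqxx /annih.
set p1 := \prod_(k' < m | k' != k) _; set p2 := \prod_(k' < m | k' != k) _.
have -> : p2 = p1.
  apply: eq_bigr => t Ht; rewrite !tbit_binv !ffunE (negbTE Ht); done.
ring.
Qed.

End Contr.


Lemma indep (F : fieldType) m (I : finType) (S : seq 'I_m) : uniq S ->
  forall (y : I -> 'rV[F]_(2 ^ m)) (A : {set I}) (c : I -> F),
  (#|A| <= (size S).+1)%N -> (forall a, a \in A -> y a != 0) ->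
  (forall k, k \in S -> exists u : I -> 'rV[F]_2,
     (forall a, a \in A -> Cx k (u a) (y a) = 0) /\
     (forall a b, a \in A -> b \in A -> a != b -> det2 (u a) (u b) != 0)) ->
  (forall a, a \notin A -> c a = 0) -> \sum_a c a *: y a = 0 -> forall a, c a = 0.
Proof.
elim: S => [|k S IH] /= US y A c HA Hy HS Hc Hsum.
  move=> a; case: (boolP (a \in A)) => Ha; last exact: Hc.
  have HA1 : forall b, b != a -> c b = 0.
    move=> b Hb; apply: Hc; apply: contraT; rewrite negbK => Hb'.
    have : (1 < #|A|)%N.
      by rewrite (cardD1 a) Ha add1n ltnS; apply/card_gt0P; exists b; rewrite !inE Hb Hb'.
    by rewrite ltnNge HA.
  move: Hsum; rewrite (bigD1 a) //= big1 ?addr0 => [/eqP|b Hb]; last by rewrite HA1 // scale0r.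
  by rewrite scaler_eq0 (negbTE (Hy a Ha)) orbF => /eqP.
case/andP: US => kS US.
case: (set_0Vmem A) => [A0|[b Hb]].
  by move=> a; apply: Hc; rewrite A0 inE.
have [u [Hu1 Hu2]] := HS k (mem_head _ _).
pose y' a := Cx k (u b) (y a).
pose c' a := if a == b then 0 else c a.
have Hyb : y' b = 0 by exact: Hu1.
have Hc' : forall a, c' a = 0.
  apply: (IH US y' (A :\ b)).
  - by move: HA; rewrite (cardsD1 b A) Hb add1n ltnS.
  - move=> a; rewrite !inE => /andP [Hab Ha]; apply/eqP => H0.
    have := Cx_det (Hu1 a Ha) H0 (Hy a Ha).
    by move/eqP; rewrite (negbTE (Hu2 a b Ha Hb Hab)).
  - move=> k' Hk'; have [u' [Hu'1 Hu'2]] : exists u', _ := HS k' (ltac:(by rewrite inE Hk' orbT)).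
    exists u'; split.
      move=> a; rewrite !inE => /andP [_ Ha].
      have nk : k != k' by apply: contraNneq kS => ->.
      by rewrite /y' Cx_comm // Hu'1 // Cx0.
    move=> a a'; rewrite !inE => /andP [_ Ha] /andP [_ Ha']; exact: Hu'2.
  - move=> a; rewrite !inE negb_and negbK /c' => /orP [/eqP ->|Ha]; first by rewrite eqxx.
    by case: eqP => // _; apply: Hc.
  - transitivity (Cx k (u b) (\sum_a c a *: y a)); last by rewrite Hsum Cx0.
    rewrite Cx_sum; apply: eq_bigr => a _; rewrite /c' /y'.
    by case: eqP => [->|//]; rewrite Hu1 // !scaler0.
have Hcb : forall a, a != b -> c a = 0.
  by move=> a Hab; have := Hc' a; rewrite /c' (negbTE Hab).
move: Hsum; rewrite (bigD1 b) //= big1 ?addr0 => [/eqP|a Ha]; last by rewrite Hcb // scale0r.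
rewrite scaler_eq0 (negbTE (Hy b Hb)) orbF => /eqP Hcb0.
by move=> a; case: (eqVneq a b) => [->//|]; apply: Hcb.
Qed.


Section BF.
Variable F : fieldType.
Implicit Types (p q : {poly F}) (v : 'rV[F]_2) (x : F).

Definition r2 (x y : F) : 'rV[F]_2 := \row_(i < 2) if i == 0 then x else y.
Lemma r2_0 x y : r2 x y 0 0 = x. Proof. by rewrite mxE. Qed.
Lemma r2_1 x y : r2 x y 0 1 = y. Proof. by rewrite mxE. Qed.

Lemma bform_sum (I : finType) e (a : I -> F) (p : I -> {poly F}) v :
  bform e (\sum_s a s *: p s) v = \sum_s a s * bform e (p s) v.
Proof.
rewrite /bform; under eq_bigr do rewrite coef_sum !big_distrl.
rewrite exchange_big /=; apply: eq_bigr => s _; rewrite big_distrr /=.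
by apply: eq_bigr => k _; rewrite coefZ; ring.
Qed.

Lemma bformD e p q v : bform e (p + q) v = bform e p v + bform e q v.
Proof. by rewrite /bform -big_split; apply: eq_bigr => k _; rewrite coefD !mulrDl. Qed.

Lemma bform0 e v : bform e 0 v = 0.
Proof. by rewrite /bform big1 // => k _; rewrite coef0 !mul0r. Qed.

Lemma bformX e p v : (size p <= e.+1)%N -> bform e.+1 ('X * p) v = bform e p v * v 0 0.
Proof.
move=> _; rewrite /bform big_ord_recl coefXM /= !mul0r add0r big_distrl.
apply: eq_bigr => k _; rewrite coefXM /bump /= subSS exprSr.
rewrite add0n; set z := _ ^+ (e - k); set w := _ ^+ k; ring.
Qed.

Lemma bformS e p v : (size p <= e.+1)%N -> bform e.+1 p v = bform e p v * v 0 1.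
Proof.
move=> Hp; rewrite /bform big_ord_recr /= nth_default // mul0r !mul0r addr0 big_distrl.
apply: eq_bigr => k _ /=; rewrite subSn ?exprSr; last by rewrite -ltnS.
by rewrite !mulrA.
Qed.

Lemma bform_horner e p x : (size p <= e.+1)%N -> bform e p (r2 x 1) = p.[x].
Proof.
move=> Hp; rewrite (horner_coef_wide x Hp) /bform.
by apply: eq_bigr => k _; rewrite r2_0 r2_1 expr1n mulr1.
Qed.

Lemma bform_scale e p (c : F) v : bform e p (c *: v) = c ^+ e * bform e p v.
Proof.
rewrite /bform big_distrr; apply: eq_bigr => k _; rewrite !mxE !exprMn.
have -> : c ^+ e = c ^+ k * c ^+ (e - k) by rewrite -exprD subnKC // -ltnS.
set a := c ^+ k; set b := c ^+ (e - k); set z := v 0 1 ^+ (e - k); rewrite /=; ring.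
Qed.

Lemma bform_inf e p v : v 0 1 = 0 -> bform e p v = p`_e * v 0 0 ^+ e.
Proof.
move=> H; rewrite /bform big_ord_recr /= subnn expr0 mulr1 big1 ?add0r // => k _.
by rewrite H expr0n subn_eq0 leqNgt ltn_ord /= mulr0.
Qed.

Lemma poly_allroots (p : {poly F}) :
  (forall i j : nat, ((i%:R : F) == j%:R) = (i == j)) ->
  (forall x, p.[x] = 0) -> p = 0.
Proof.
move=> Hnat Hx; apply/eqP; apply: contraT => Hp.
have := @max_poly_roots F p [seq (i%:R : F) | i <- iota 0 (size p)] Hp.
rewrite size_map size_iota ltnn; apply.
  by apply/allP => x /mapP [i _ ->]; apply/rootP.
rewrite map_inj_uniq ?iota_uniq // => i i' /eqP; rewrite Hnat => /eqP.
done.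
Qed.

End BF.


Section Curves.
Variable F : fieldType.
Hypothesis Hnat : forall i j : nat, ((i%:R : F) == j%:R) = (i == j).

Lemma rV2_eq0 (v : 'rV[F]_2) : v 0 0 = 0 -> v 0 1 = 0 -> v = 0.
Proof.
move=> H0 H1; apply/rowP => t; rewrite mxE.
case: t => [[|[|//]]] Ht.
  by have -> : Ordinal Ht = 0 by apply: val_inj.
by have -> : Ordinal Ht = 1 by apply: val_inj.
Qed.

Lemma rmap_scale m e (P : 'I_m.+1 -> {poly F}) c v :
  rmap_pt e P (c *: v) = c ^+ e *: rmap_pt e P v.
Proof. by apply/rowP => i; rewrite !mxE bform_scale. Qed.

Lemma rmap_nz m e (P : 'I_m.+1 -> {poly F}) v :
  regular_P1_map e P -> v != 0 -> rmap_pt e P v != 0.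
Proof.
case=> Hs Hd [i0 Hi0] Hv; apply/eqP => H0.
have Hz : forall i, bform e (P i) v = 0.
  by move=> i; have := congr1 (fun z : 'rV[F]_(m.+1) => z 0 i) H0; rewrite !mxE.
case: (eqVneq (v 0 1) 0) => H1.
  have H00 : v 0 0 != 0 by apply: contraNneq Hv => H00; apply/eqP; exact: rV2_eq0.
  move: (Hz i0); rewrite bform_inf // => /eqP; rewrite mulf_eq0 (negbTE Hi0) /=.
  by rewrite expf_eq0 (negbTE H00) andbF.
pose t := v 0 0 / v 0 1.
have Hvt : v = v 0 1 *: r2 t 1.
  apply/rowP => k; rewrite !mxE.
  case: k => [[|[|//]]] Hk.
    have -> : Ordinal Hk = 0 by apply: val_inj.
    by rewrite /= /t mulrC divfK.
  have -> : Ordinal Hk = 1 by apply: val_inj.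
  by rewrite /= mulr1.
have Hr : forall i, root (P i) t.
  move=> i; move: (Hz i); rewrite Hvt bform_scale bform_horner; last exact: Hs.
  by move/eqP; rewrite mulf_eq0 expf_eq0 (negbTE H1) andbF /= => /eqP H; apply/rootP.
have Hdv : forall s, ('X - t%:P) %| P s.
  by move=> s; rewrite dvdp_XsubCl; exact: Hr.
have := Hd _ Hdv.
by rewrite size_XsubC.
Qed.

Lemma size_lc m e (Phi : 'M[F]_(m.+1, 2 ^ m)) (P : 'I_m.+1 -> {poly F}) t :
  (forall i, is_bform e (P i)) -> (size (\sum_s Phi s t *: P s)%R <= e.+1)%N.
Proof.
move=> Hs; elim/big_ind: _ => //.
  by rewrite size_poly0.
  by move=> p q Hp Hq; apply: leq_trans (size_polyD _ _) _; rewrite geq_max Hp Hq.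
by move=> s _; apply: leq_trans (size_scale_leq _ _) _; apply: Hs.
Qed.

Lemma curve_everywhere m (Phi : 'M[F]_(m.+1, 2 ^ m)) k e P :
  factorization_curve Phi k e P -> forall v, Cx k v (rmap_pt e P v *m Phi) = 0.
Proof.
case=> [[Hs _ _] [d [f [Hfb Hf0 Hgen]]]].
have Hg : forall v, v != 0 -> bform d f v != 0 -> Cx k v (rmap_pt e P v *m Phi) = 0.
  move=> v Hv Hfv; have [_ /andP [Hsub _]] := Hgen v Hv Hfv.
  move: Hsub; rewrite /preimSigma => /sub_kermxP; rewrite mulmxA => /eqP.
  by rewrite -submxE => Hs'; exact: Sigma0_Cx.
pose Lp (t : 'I_(2 ^ m)) := \sum_s Phi s t *: P s.
have Hent : forall v t, (rmap_pt e P v *m Phi) 0 t = bform e (Lp t) v.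
  move=> v t; rewrite !mxE bform_sum; apply: eq_bigr => s _; rewrite mxE; exact: mulrC.
move=> v; apply/rowP => i; rewrite [RHS]mxE mxE !Hent.
set A := Lp _; set B := Lp _.
have HA : (size A <= e.+1)%N by exact: size_lc.
have HB : (size B <= e.+1)%N by exact: size_lc.
have HQ : forall w, bform e A w * w 0 0 + bform e B w * w 0 1 = bform e.+1 ('X * A + B) w.
  by move=> w; rewrite bformD bformX // bformS.
rewrite HQ.
suff -> : 'X * A + B = 0 by rewrite bform0.
have Hsq : (size ('X * A + B)%R <= e.+2)%N.
  apply: leq_trans (size_polyD _ _) _; rewrite geq_max; apply/andP; split; last exact: leq_trans HB _.
  by apply: leq_trans (size_polyMleq _ _) _; rewrite size_polyX.
have Hqf : ('X * A + B) * f = 0.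
  apply: poly_allroots => // x; rewrite hornerM.
  case: (eqVneq f.[x] 0) => [->|Hfx]; first by rewrite mulr0.
  have Hx : r2 x 1 != 0 by apply/eqP => /(congr1 (fun z : 'rV[F]_2 => z 0 1)); rewrite r2_1 mxE; apply/eqP; exact: oner_neq0.
  have := Hg _ Hx; rewrite bform_horner // => /(_ Hfx) /(congr1 (fun z : 'rV[F]_(2 ^ m) => z 0 i)).
  by rewrite [X in _ = X]mxE mxE !Hent HQ bform_horner // => ->; rewrite mul0r.
by move/eqP: Hqf; rewrite mulf_eq0 (negbTE Hf0) orbF => /eqP.
Qed.

End Curves.


Lemma det0_prop (F : fieldType) (u u' : 'rV[F]_2) :
  u != 0 -> det2 u u' = 0 -> exists c, u' = c *: u.
Proof.
rewrite /det2 => Hu Hd.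
case: (eqVneq (u 0 0) 0) => H0.
  have H1 : u 0 1 != 0 by apply: contraNneq Hu => H1; apply/eqP; exact: rV2_eq0.
  exists (u' 0 1 / u 0 1); apply/rowP => k; rewrite !mxE.
  case: k => [[|[|//]]] Hk.
    have -> : Ordinal Hk = 0 by apply: val_inj.
    rewrite H0 mulr0; move: Hd; rewrite H0 mul0r sub0r => /eqP; rewrite oppr_eq0 mulf_eq0 (negbTE H1) /=.
    by move/eqP.
  have -> : Ordinal Hk = 1 by apply: val_inj.
  by rewrite divfK.
exists (u' 0 0 / u 0 0); apply/rowP => k; rewrite !mxE.
case: k => [[|[|//]]] Hk.
  have -> : Ordinal Hk = 0 by apply: val_inj.
  by rewrite divfK.
have -> : Ordinal Hk = 1 by apply: val_inj.
apply: (mulIf H0); rewrite mulrAC divfK //.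
move/eqP: Hd; rewrite subr_eq0 => /eqP Hd.
by rewrite [u' 0 1 * _]mulrC Hd mulrC.
Qed.

Lemma det0_eqmx (F : fieldType) (u u' : 'rV[F]_2) :
  u != 0 -> u' != 0 -> det2 u u' = 0 -> (u == u')%MS.
Proof.
move=> Hu Hu' Hd; have [c Hc] := det0_prop Hu Hd.
have Hc0 : c != 0 by apply: contraNneq Hu' => c0; rewrite Hc c0 scale0r.
apply/andP; split; last by rewrite Hc scalemx_sub.
have -> : u = c^-1 *: u' by rewrite Hc scalerA mulVf // scale1r.
by rewrite scalemx_sub.
Qed.

Unset Implicit Arguments. Set Strict Implicit.

Theorem corollary2p16 (R : realType) (F : fieldType)
    (HF : F = (R : fieldType) \/ F = ((R[i])%C : fieldType))
    (m : nat) (Phi : 'M[F]_(m.+1, 2 ^ m))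
    (HPhi : factorization_structure Phi)
    (e : 'I_m -> nat) (P : 'I_m -> 'I_m.+1 -> {poly F})
    (Hcurves : forall k : 'I_m, factorization_curve Phi k (e k) (P k))
    (j : 'I_m)
    (Hdecomp : exists S : {set 'I_m},
       (forall k, k \in S <-> same_image (e k) (e j) (P k) (P j)) /\ #|S| = e j)
    (r : nat) (Hr : (1 <= r <= (e j).+1)%N)
    (l : 'I_r -> 'rV[F]_2)
    (Hl0 : forall a, l a != 0)
    (Hldist : forall a b, a != b -> ~~ (l a == l b)%MS) :
  row_free (\matrix_(a < r) rmap_pt (e j) (P j) (l a)).
Proof.
have Hnat : forall i j : nat, ((i%:R : F) == j%:R) = (i == j).
  by case: HF => HF'; subst F => i' j'; exact: Num.Theory.eqr_nat.
case: HPhi => Hfree _.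
have [S [HS HSc]] := Hdecomp.
have Hreg := (Hcurves j).1.
pose w a := rmap_pt (e j) (P j) (l a).
have Hw : forall a, w a != 0 by move=> a; exact: rmap_nz Hreg (Hl0 a).
pose Y a := w a *m Phi.
have HY : forall a, Y a != 0.
  move=> a; apply/eqP => H; move/eqP: (Hw a); apply.
  by apply: (row_free_inj Hfree); rewrite mul0mx.
have Hev := fun k => curve_everywhere Hnat (Hcurves k).
have Hdetl : forall a b, a != b -> forall y, y != 0 ->
    Cx j (l a) y = 0 -> Cx j (l b) y = 0 -> False.
  move=> a b Hab y Hy Ha Hb; have Hd := Cx_det Ha Hb Hy.
  by move: (Hldist a b Hab); rewrite det0_eqmx.
have HSk : forall k, k \in S -> exists u : 'I_r -> 'rV[F]_2,
    (forall a, a \in [set: 'I_r] -> Cx k (u a) (Y a) = 0) /\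
    (forall a b, a \in [set: 'I_r] -> b \in [set: 'I_r] -> a != b -> det2 (u a) (u b) != 0).
  move=> k Hk.
  have Himg : forall a, exists v, v != 0 /\ (rmap_pt (e k) (P k) v == w a)%MS.
    move=> a; apply/((HS k).1 Hk (w a) (Hw a)).
    by exists (l a); split; [exact: Hl0|apply/andP; split; exact: submx_refl].
  have [u Hu] := fin_all_exists Himg.
  exists u; split.
    move=> a _; have /andP [_ /sub_rVP [t Ht]] := (Hu a).2.
    by rewrite /Y Ht -scalemxAl Cx_scale Hev scaler0.
  move=> a b _ _ Hab; apply/eqP => Hd.
  have [c Hc] := det0_prop (Hu a).1 Hd.
  have Hwb : (w b <= w a)%MS.
    have /andP [_ H1] := (Hu b).2; have /andP [H2 _] := (Hu a).2.
    apply: submx_trans H1 _; rewrite Hc rmap_scale.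
    exact: scalemx_sub.
  case/sub_rVP: Hwb => s Hs.
  have Hs0 : s != 0 by apply: contraNneq (Hw b) => s0; rewrite Hs s0 scale0r.
  apply: (Hdetl a b Hab (Y a) (HY a)); first exact: Hev.
  have := Hev j (l b); rewrite -/(w b) Hs -scalemxAl Cx_scale => /eqP.
  by rewrite scaler_eq0 (negbTE Hs0) /= => /eqP.
have Hind := @indep F m 'I_r (enum S) (enum_uniq _) Y [set: 'I_r].
rewrite -kermx_eq0; apply/rowV0P => c /sub_kermxP Hc.
have Hsum : \sum_a c 0 a *: Y a = 0.
  transitivity ((c *m \matrix_(a < r) rmap_pt (e j) (P j) (l a)) *m Phi); last by rewrite Hc mul0mx.
  rewrite [c *m _]mulmx_sum_row mulmx_suml; apply: eq_bigr => a _.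
  by rewrite rowK -scalemxAl.
have Hc0 := Hind (fun a => c 0 a) _ (fun a _ => HY a) (fun k Hk => HSk k (ltac:(by rewrite -mem_enum))) _ Hsum.
apply/rowP => a; rewrite mxE; apply: Hc0.
- by rewrite cardsT card_ord -cardE HSc; case/andP: Hr.
- by move=> a'; rewrite inE.
Qed.
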